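(* There are infinitely many odd integers $n$ such that $\varphi(2^n-1)/(2^n-1)>1/3$, where $\varphi$ is Euler's totient function. *)

(* Defs.v *)
From mathcomp Require Import all_boot.

(* Main.v *)
Require Import Defs.
From mathcomp Require Import all_boot zify.

Lemma lemA (a : nat) (s : seq nat) : all (fun q => a < q) s ->
  \prod_(q <- s) q * (a - size s) <= a * \prod_(q <- s) q.-1.
Proof.
elim: s => [|q s IH] /=; first by rewrite !big_nil mul1n muln1 subn0.
case/andP => aq /IH {}IH; rewrite !big_cons.
set P := \prod_(j <- s) j in IH *; set P' := \prod_(j <- s) j.-1 in IH *.
have h1 : q * (a - (size s).+1) <= q.-1 * (a - size s).
  case: (leqP a (size s)) => h; first by rewrite (_ : a - (size s).+1 = 0) ?muln0; lia.
  have -> : a - size s = (a - (size s).+1).+1 by lia.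
  set d := a - (size s).+1.
  have hq : q = q.-1.+1 by lia.
  rewrite {1}hq mulSn mulnS leq_add2r; lia.
apply: (@leq_trans (q.-1 * (P * (a - size s)))).
  rewrite (mulnC q P) -mulnA mulnCA.
  by rewrite mulnCA [X in _ <= X]mulnCA leq_mul2l h1 orbT.
by rewrite [X in _ <= X]mulnCA leq_mul2l IH orbT.
Qed.

Lemma lemB (s : seq nat) : all (fun q => 4 <= q) s -> 4 ^ size s <= \prod_(q <- s) q.
Proof.
elim: s => [|q s IH] /=; first by rewrite big_nil.
case/andP => h /IH {}IH; rewrite big_cons expnS; exact: leq_mul.
Qed.

Lemma primes_big p q : prime p -> 2 < p -> prime q -> q %| 2 ^ p - 1 -> p < q.
Proof.
move=> pp p2 pq qd; rewrite ltnNge; apply/negP => qp.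
have q1 := prime_gt1 pq.
have cop : coprime (q.-1) p.
  rewrite coprime_sym prime_coprime //; apply/negP => /dvdn_leq; lia.
have [km kn e _] := @egcdnP q.-1 p ltac:(lia).
move: e; rewrite (eqP cop) => e.
have h2 : 2 ^ p = 1 %[mod q].
  apply/eqP; rewrite eqn_mod_dvd ?expn_gt0 //.
have f := fermat_little 2 pq.
have hA : 2 ^ (km * q) = 2 ^ km %[mod q] by rewrite mulnC expnM -modnXm f modnXm.
have hB : 2 ^ (km * q) = 2 * 2 ^ km %[mod q].
  have -> : km * q = kn * p + 1 + km.
    by rewrite -[in km * q](prednK (prime_gt0 pq)) mulnS e addnC.
  by rewrite (mulnC kn p) !expnD expnM expn1 -mulnA -modnMml -modnXm h2 modnXm exp1n modnMml mul1n.
have : q %| 2 ^ km.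
  have : 2 * 2 ^ km == 2 ^ km %[mod q] by rewrite -hB hA.
  by rewrite eqn_mod_dvd ?leq_pmull // -{2}(mul1n (2 ^ km)) -mulnBl mul1n.
rewrite (Euclid_dvdX _ _ pq) => /andP [] /dvdn_leq h _.
have q2 : q = 2 by have := h isT; lia.
move: qd; rewrite q2.
have : odd (2 ^ p - 1) by rewrite oddB ?expn_gt0 // oddX; case: p p2 {pp qp cop e h2 hA hB} => //.
by rewrite dvdn2 => ->.
Qed.

Theorem lemma5p2 :
  forall N : nat, exists n : nat,
    N < n /\ odd n /\ 2 ^ n - 1 < 3 * totient (2 ^ n - 1).
Proof.
move=> N; have [p Np pp] := prime_above (N + 3).
have p3 : 3 < p by lia.
have op : odd p by case: (even_prime pp) => //; lia.
exists p; split; first lia; split => //.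
set m := 2 ^ p - 1.
have m0 : 0 < m by rewrite /m subn_gt0 -{1}(expn0 2) ltn_exp2l //; lia.
set P := primes m.
have hP : all (fun q => p < q) P.
  apply/allP => q; rewrite mem_primes => /and3P [pq _ qd].
  by apply: primes_big => //; lia.
set rad := \prod_(q <- P) q.
set R := \prod_(q <- P) q ^ (logn q m).-1.
set T' := \prod_(q <- P) q.-1.
have em : m = rad * R.
  rewrite {1}(prod_prime_decomp m0) prime_decompE big_map /rad /R -big_split /=.
  apply: eq_big_seq => q; rewrite -logn_gt0 => h.
  by rewrite -expnS prednK.
have et : totient m = T' * R.
  rewrite totientE // /T' /R -big_split /=.
  by [].
set k := size P.
have h4 : 4 ^ k <= rad.
  apply: lemB; apply/allP => q /(allP hP) /=; lia.
have hr : rad <= m by rewrite em leq_pmulr // lt0n; apply/eqP => R0; move: m0; rewrite em R0 muln0.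
have hk : 2 * k < p.
  rewrite -(ltn_exp2l _ _ (isT : 1 < 2)) expnM.
  apply: (leq_ltn_trans h4); apply: (leq_ltn_trans hr).
  by rewrite /m subn1 prednK ?expn_gt0.
have hA := lemA _ _ hP.
have hm : m * (p - k) <= p * totient m.
  by rewrite et {1}em mulnAC mulnA leq_mul2r hA orbT.
have h3 : p < 3 * (p - k) by lia.
have H1 : m * p < m * (3 * (p - k)) by rewrite ltn_pmul2l.
have H2 : m * (3 * (p - k)) <= 3 * totient m * p.
  by rewrite mulnCA -mulnA leq_mul2l (mulnC _ p) hm orbT.
by rewrite -(@ltn_pmul2r p) ?(leq_trans _ p3) //; apply: (leq_trans H1 H2).
Qed.
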